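(* Let $K$ be a perfect field and let $M/K$ be obtained by strong cluster magnification from $L/K$ through a finite Galois extension $F/K$ of degree $d$. Let $L_1,\dots,L_s$ be the $s=s_K(L)$ distinct fields isomorphic to $L$ over $K$, in some order. Then the tower $K\subseteq L_1\subseteq L_1L_2\subseteq\cdots\subseteq L_1L_2\cdots L_s$ (a cluster tower for $L/K$) has length $l$ if and only if the tower $K\subseteq L_1F\subseteq L_1L_2F\subseteq\cdots\subseteq L_1L_2\cdots L_sF$ (a cluster tower for $M/K$) has length $l$. In that case, if the degree sequence of the first tower is $(a_0,a_1,\dots,a_{l-2})$, then the degree sequence of the second tower is $(da_0,da_1,\dots,da_{l-2})$.
   Context: $\bar K$ is a fixed algebraic closure of $K$; $\tilde E$ denotes the Galois closure in $\bar K$ of a finite extension $E/K$. $M/K$ is obtained by strong cluster magnification from a subextension $L/K$ through a finite Galois extension $F/K$ if $[L:K]>2$, $\tilde L\cap F=K$ and $M=LF$. For $L/K$ with $G=\mathrm{Gal}(\tilde L/K)$, $H=\mathrm{Gal}(\tilde L/L)$, $s_K(L)=[G:N_G(H)]$ is the number of distinct subfields of $\bar K$ isomorphic to $L$ over $K$. Given an ordering $(L_1,\dots,L_s)$ of these fields, the cluster tower is $K\subseteq L_1\subseteq L_1L_2\subseteq\cdots\subseteq L_1\cdots L_s=\tilde L$; its length is the number of distinct fields in the tower, and its degree sequence is the list of degrees over $K$ of the distinct fields of the tower other than $K$, in increasing order. (The distinct fields isomorphic to $M$ over $K$ are exactly the $L_iF$.) *)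

(* Defs.v *)
From HB Require Import structures.
From mathcomp Require Import all_boot all_order all_algebra all_fingroup all_field.
Set Implicit Arguments. Unset Strict Implicit. Unset Printing Implicit Defensive.
Import GRing.Theory.
Local Open Scope ring_scope.

Definition perfect_field (K : fieldType) : Prop :=
  [pchar K] =i pred0 \/
  exists2 p : nat, p \in [pchar K] & forall y : K, exists x : K, x ^+ p = y.

Section ClusterDefs.
Variables (K : fieldType) (Om : splittingFieldType K).
(* Om plays the role of (a finite normal piece of) \bar K; subfields of Om
   containing K are the elements of {subfield Om}, and K itself is 1%AS. *)

Definition iso_over_K (L E : {subfield Om}) : Prop :=
  exists f : 'End(Om), kHom 1%VS L f /\ (f @: L)%VS = E.

Definition gal_closure (L : {subfield Om}) : {subfield Om} :=
  \big[(fun A B : {subfield Om} => (A * B)%AS)/1%AS]_(s in 'Gal({:Om} / 1%VS)%g)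
     (s @: L)%AS.

Definition compositum (s : seq {subfield Om}) : {subfield Om} :=
  foldr (fun A B : {subfield Om} => (A * B)%AS) 1%AS s.

Definition cluster_tower (s : seq {subfield Om}) : seq {subfield Om} :=
  [seq compositum (take i s) | i <- iota 0 (size s).+1].

Definition tower_length (t : seq {subfield Om}) : nat := size (undup t).

Definition degree_sequence (t : seq {subfield Om}) : seq nat :=
  sort leq (map (fun E : {subfield Om} => \dim E) [seq E <- undup t | E != 1%AS]).

Definition strong_cluster_magnification (L F M : {subfield Om}) : Prop :=
  [/\ (2 < \dim L)%N, galois 1%VS F, (gal_closure L :&: F)%AS = 1%AS
    & M = (L * F)%AS].

End ClusterDefs.

(* Main.v *)
Require Import Defs.
From HB Require Import structures.
From mathcomp Require Import all_boot all_order all_algebra all_fingroup all_field.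
From Stdlib Require FunctionalExtensionality.

Set Implicit Arguments. Unset Strict Implicit. Unset Printing Implicit Defensive.
Import GRing.Theory.

Section Aux.
Local Open Scope ring_scope.
Variables (K : fieldType) (Om : splittingFieldType K).

Lemma dim_compositum (E F : {subfield Om}) :
  galois 1%VS F -> (E :&: F)%VS = 1%VS -> \dim (E * F)%VS = (\dim E * \dim F)%N.
Proof.
move=> galF capEF.
have /and3P[sF sepF nF] := galF.
set a := separable_generator 1%VS F.
have defF : F = <<1%VS; a>>%VS :> {vspace Om} by apply: eq_adjoin_separable_generator.
have aF : a \in F by apply: separable_generator_mem.
have defEF : (E * F)%VS = <<E; a>>%VS.
  apply/eqP; rewrite eqEsubv; apply/andP; split.
    apply: prodv_sub; first exact: subv_adjoin.
    by rewrite defF; apply: adjoinSl; apply: sub1v.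
  apply/FadjoinP; split; first exact: field_subvMr.
  by apply: subvP aF; apply: field_subvMl.
have eqmp : minPoly E a = minPoly 1%VS a.
  have dv : minPoly E a %| minPoly 1%VS a by apply: minPolyS; apply: sub1v.
  have [r [_ _ defm]] := (elimT (galois_factors sF)) galF a aF.
  have overF : minPoly E a \is a polyOver F.
    move: dv; rewrite defm => /dvdp_prod_XsubC[m].
    rewrite eqp_monic ?monic_minPoly ?monic_prod_XsubC // => /eqP->.
    rewrite big_seq; apply: rpred_prod => b /mem_mask /mapP[x _ ->].
    by rewrite polyOverXsubC memv_gal.
  have over1 : minPoly E a \is a polyOver 1%VS.
    rewrite -capEF; apply/polyOverP => i; rewrite memv_cap.
    by rewrite (polyOverP overF) (polyOverP (minPolyOver E a)).
  have dv2 : minPoly 1%VS a %| minPoly E a by apply: minPoly_dvdp => //; apply: root_minPoly.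
  by apply/eqP; rewrite -eqp_monic ?monic_minPoly // /eqp dv dv2.
rewrite defEF dim_Fadjoin mulnC; congr (_ * _)%N.
rewrite defF dim_Fadjoin dimv1 muln1.
have := size_minPoly E a; rewrite eqmp size_minPoly; move=> [h]. by rewrite /adjoin_degree h.
Qed.

Lemma big_sub_aspace (I : eqType) (r : seq I) (P : pred I) (Fn : I -> {subfield Om}) i :
  i \in r -> P i ->
  (Fn i <= \big[(fun A B : {subfield Om} => (A * B)%AS)/1%AS]_(j <- r | P j) Fn j)%VS.
Proof.
elim: r => [|j r IH] //; rewrite inE big_cons => /orP[/eqP<- ->|ir Pi].
  exact: field_subvMr.
case: (P j); last exact: IH.
apply: subv_trans (IH ir Pi) _; exact: field_subvMl.
Qed.

Lemma compositum_sub (s : seq {subfield Om}) (A : {subfield Om}) :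
  (forall E, E \in s -> (E <= A)%VS) -> (compositum s <= A)%VS.
Proof.
elim: s => [|E s IH] H /=; first exact: sub1v.
apply: prodv_sub; first by apply: H; rewrite inE eqxx.
by apply: IH => X Xs; apply: H; rewrite inE Xs orbT.
Qed.

Lemma compositum_map (s : seq {subfield Om}) (F : {subfield Om}) :
  s != [::] -> compositum [seq (E * F)%AS | E <- s] = (compositum s * F)%AS.
Proof.
elim: s => [|E s IH] // _.
case: s IH => [|E' s] IH /=.
  by apply: val_inj => /=; rewrite !prodv1.
rewrite /= in IH; rewrite IH //; apply: val_inj => /=.
set Y := (E' * compositum s)%VS. rewrite prodvA [(E * F * Y)%VS]prodvAC -prodvA prodv_id. done.
Qed.



Lemma undup_map_in (T1 T2 : eqType) (g : T1 -> T2) (s : seq T1) :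
  {in s &, injective g} -> undup (map g s) = map g (undup s).
Proof.
elim: s => [|x s IH] // inj /=.
have inj' : {in s &, injective g}.
  by move=> a b a_s b_s; apply: inj; rewrite inE ?a_s ?b_s orbT.
have -> : (g x \in map g s) = (x \in s).
  apply/mapP/idP => [[y ys /inj eq]|xs]; last by exists x.
  by rewrite eq ?inE ?eqxx ?ys ?orbT.
by case: (x \in s); rewrite /= IH.
Qed.


End Aux.

Unset Implicit Arguments.

Theorem mainTheorem7 (K : fieldType) (Om : splittingFieldType K)
    (L F M : {subfield Om}) (d : nat) (Ls : seq {subfield Om}) :
  perfect_field K ->
  strong_cluster_magnification L F M ->
  d = \dim F ->
  uniq Ls ->
  (forall E : {subfield Om}, E \in Ls <-> iso_over_K L E) ->
  let t1 := cluster_tower Ls in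
  let t2 := cluster_tower [seq (E * F)%AS | E <- Ls] in
  (forall l : nat, tower_length t1 = l <-> tower_length t2 = l) /\
  degree_sequence t2 = [seq d * a | a <- degree_sequence t1].
Proof.
move=> _ [dimL galF capNF _] dE _ isoLs t1 t2.
set N := gal_closure L in capNF.
have capNFv : (N :&: F)%VS = 1%VS by rewrite -[RHS]/(asval 1%AS) -capNF.
have d_gt0 : (0 < d)%N by rewrite dE adim_gt0.
have capC : forall C : {subfield Om}, (C <= N)%VS -> (C :&: F)%VS = 1%VS.
  move=> C sCN; apply/eqP; rewrite eqEsubv; apply/andP; split.
    by rewrite -capNFv; apply: capvS.
  by rewrite subv_cap !sub1v.
have dimC : forall C : {subfield Om}, (C <= N)%VS -> \dim (C * F)%VS = (\dim C * d)%N.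
  by move=> C sCN; rewrite dE dim_compositum // capC.
have claim : forall C : {subfield Om}, (C <= N)%VS -> (((C * F)%AS :&: N)%AS : {vspace Om}) = C.
  move=> C sCN; set D := ((C * F)%AS :&: N)%AS.
  have sCD : (C <= D)%VS by rewrite subv_cap field_subvMr sCN.
  have sDN : (D <= N)%VS by apply: capvSr.
  have eDF : (D * F)%VS = (C * F)%VS.
    apply/eqP; rewrite eqEsubv; apply/andP; split; last exact: prodvSl.
    apply: (prodv_sub (A := (C * F)%AS)); first exact: capvSl.
    exact: field_subvMl.
  have := dimC D sDN; rewrite eDF dimC // => /eqP; rewrite eqn_pmul2r // => /eqP eqd.
  by apply/eqP; rewrite eq_sym eqEdim sCD eqd leqnn.
have isoE : forall E, E \in Ls -> (E <= N)%VS /\ \dim E = \dim L.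
  move=> E /isoLs[f [hf <-]]; split; last by rewrite (kHom_dim hf).
  have sL : (1 <= L <= fullv)%VS by rewrite sub1v subvf.
  have [x galx eqx] := kHom_to_gal sL (normalFieldf _) hf.
  rewrite (eq_in_limg eqx).
  rewrite /N /gal_closure. apply: (big_sub_aspace _ (mem_index_enum x) galx).
have cN : forall i, (compositum (take i Ls) <= N)%VS.
  by move=> i; apply: compositum_sub => E /mem_take /isoE[].
have ne1 : forall i, (0 < i)%N -> Ls != [::] -> compositum (take i Ls) != 1%AS.
  case=> // i _; case Hs: Ls => [|E0 Ls'] // _ /=.
  have E0in : E0 \in Ls by rewrite Hs mem_head.
  apply/eqP => h.
  have := congr1 (fun A : {subfield Om} => asval A) h => /= h'.
  have sE0 : (E0 <= 1)%VS by rewrite -h'; apply: field_subvMr.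
  have := dimvS sE0; rewrite dimv1 (isoE E0 E0in).2.
  by move=> /(leq_trans dimL).
have gne1 : forall C : {subfield Om}, C != 1%AS -> (C * F)%AS != 1%AS.
  move=> C; apply: contra => /eqP h.
  have := congr1 (fun A : {subfield Om} => asval A) h => /= h'.
  have sC : (C <= 1)%VS by rewrite -h'; apply: field_subvMr.
  apply/eqP; apply: val_inj => /=; apply/eqP; rewrite eqEsubv sC; exact: sub1v.
set g := fun C : {subfield Om} => if C == 1%AS then 1%AS else (C * F)%AS.
have t2E : t2 = map g t1.
  rewrite /t2 /t1 /cluster_tower size_map -map_comp; apply/eq_in_map => i /=.
  case: i => [|i]; first by rewrite /g !take0 /= eqxx.
  rewrite inE mem_iota add1n ltnS => iL.
  have Lne : Ls != [::] by case: (Ls) iL.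
  rewrite /g (negbTE (ne1 i.+1 isT Lne)) -map_take compositum_map //.
  by case: (Ls) iL.
have sub_t1 : forall C, C \in t1 -> (C <= N)%VS.
  by move=> C /mapP[i _ ->].
have ginj : {in t1 &, injective g}.
  move=> C1 C2 /sub_t1 s1 /sub_t1 s2; rewrite /g.
  case: eqP => [->|/eqP n1]; case: eqP => [->|/eqP n2] //.
  - by move=> h; move: (gne1 _ n2); rewrite -h eqxx.
  - by move=> h; move: (gne1 _ n1); rewrite h eqxx.
  - by move=> h; apply: val_inj => /=; rewrite -(claim C1 s1) -(claim C2 s2) h.
have gone : forall C, C \in t1 -> (g C != 1%AS) = (C != 1%AS).
  move=> C _; rewrite /g /=; case: (C =P 1%AS) => [_|/eqP n]; first by rewrite eqxx.
  by rewrite gne1.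
have gdim : forall C, C \in t1 -> C != 1%AS -> \dim (g C) = (d * \dim C)%N.
  by move=> C /sub_t1 sC n; rewrite /g (negbTE n) /= dimC // mulnC.
split.
  by move=> l; rewrite /tower_length t2E (undup_map_in ginj) size_map.
rewrite /degree_sequence t2E (undup_map_in ginj) filter_map.
rewrite (@eq_in_filter _ _ (fun E => E != 1%AS)); last first.
  by move=> C; rewrite mem_undup => /gone.
rewrite -map_comp.
set s0 := filter _ _.
have -> : [seq ((fun E : {subfield Om} => \dim E) \o g) i | i <- s0] =
          [seq (d * \dim E)%N | E : {subfield Om} <- s0].
  apply/eq_in_map => C; rewrite mem_filter mem_undup => /andP[n Ct]; exact: gdim.
rewrite (map_comp (muln d)) sort_map.
congr (map _ (sort _ _)).
apply: FunctionalExtensionality.functional_extensionality => x.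
apply: FunctionalExtensionality.functional_extensionality => y.
by rewrite /relpre /= leq_pmul2l.
Qed.
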